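(* Let $Q$ be a commutative automorphic loop of nilpotency class $3$. Then for every $a,b,c\in Q$ and every $n\in\mathbb Z$: \begin{align*} (a^n,b,c)&=(a,b,c)^n((a,b,c),a,a)^{\alpha(n)}((a,b,c),a,b)^{\beta(n)}((a,b,c),a,c)^{\beta(n)},\\ (a,b^n,c)&=(a,b,c)^n((a,b,c),b,b)^{\alpha(n)}((a,b,c),b,a)^{\beta(n)}((a,b,c),b,c)^{\beta(n)},\\ (a,b,c^n)&=(a,b,c)^n((a,b,c),c,c)^{\alpha(n)}((a,b,c),c,a)^{\beta(n)}((a,b,c),c,b)^{\beta(n)}, \end{align*} where $\alpha(n)=(n^3-n)/3$ and $\beta(n)=n^2-n$.
   Context: A loop is a set with a binary operation such that all left and right translations $L_a:b\mapsto ab$, $R_a:b\mapsto ba$ are bijections and there is a two-sided identity $1$. The inner mapping group is the stabilizer of $1$ in the group generated by all translations; $Q$ is automorphic if all inner mappings are automorphisms. Automorphic loops are power-associative (each element generates a group), so $a^n$ is well defined for $n\in\mathbb Z$. The associator $(a,b,c)$ is defined by $(ab)c=(a(bc))(a,b,c)$. The center $Z(Q)$ is the set of elements fixed by all inner mappings; $Z_0=1$, $Z_{i+1}(Q)$ is the preimage of $Z(Q/Z_i(Q))$, and $Q$ has nilpotency class $n$ if $Z_{n-1}(Q)\neq Q=Z_n(Q)$. *)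

(* Defs.v *)
From mathcomp Require Import all_boot all_algebra.
Set Implicit Arguments. Unset Strict Implicit. Unset Printing Implicit Defensive.
Import GRing.Theory Num.Theory.

(* A loop, given equationally: the left/right divisions are the inverses of
   the left/right translations L_a : b |-> a b and R_a : b |-> b a, so that
   all translations are bijections; [lone] is a two-sided identity. *)
Record loop := Loop {
  lsort :> Type;
  lmul : lsort -> lsort -> lsort;
  lldiv : lsort -> lsort -> lsort;   (* a \ b, i.e. L_a^{-1} b *)
  lrdiv : lsort -> lsort -> lsort;   (* b / a, i.e. R_a^{-1} b *)
  lone : lsort;
  lmulKl : forall a b, lmul a (lldiv a b) = b;
  lldivK : forall a b, lldiv a (lmul a b) = b;
  lmulKr : forall a b, lmul (lrdiv b a) a = b;
  lrdivK : forall a b, lrdiv (lmul b a) a = b;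
  lmul1l : forall a, lmul lone a = a;
  lmul1r : forall a, lmul a lone = a
}.

Section LoopDefs.
Variable Q : loop.
Local Notation "x * y" := (lmul x y).
Local Notation "1" := (lone Q).

Definition Ltr (a : Q) : Q -> Q := fun b => a * b.
Definition Rtr (a : Q) : Q -> Q := fun b => b * a.

Inductive mlt : (Q -> Q) -> Prop :=
| mlt_id : mlt id
| mlt_L f a : mlt f -> mlt (Ltr a \o f)
| mlt_R f a : mlt f -> mlt (Rtr a \o f)
| mlt_Li f a : mlt f -> mlt ((fun b => lldiv a b) \o f)
| mlt_Ri f a : mlt f -> mlt ((fun b => lrdiv b a) \o f).

Definition inner (phi : Q -> Q) : Prop := mlt phi /\ phi 1 = 1.

Definition commutative_loop : Prop := forall x y : Q, x * y = y * x.

Definition automorphic : Prop :=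
  forall phi, inner phi ->
    bijective phi /\ forall x y : Q, phi (x * y) = phi x * phi y.

(* Z_{i+1} is the preimage of Z(Q/Z_i),
   where the center is the set of elements fixed by all inner mappings.
   Working with representatives: the elements of Mlt(Q/Z_i) are exactly the
   maps induced by the elements phi of Mlt(Q), such a map is an inner mapping
   of Q/Z_i iff phi 1 lies in the coset 1 Z_i = Z_i, and it fixes the coset
   x Z_i iff phi x lies in x Z_i. *)
Fixpoint zcenter (i : nat) : Q -> Prop :=
  match i with
  | 0 => fun x => x = 1
  | i'.+1 => fun x =>
      forall phi, mlt phi -> zcenter i' (phi 1) ->
        exists2 z, zcenter i' z & phi x = x * z
  end.

Definition center (x : Q) : Prop := zcenter 1 x.

Definition nilpotency_class (n : nat) : Prop :=
  (exists x : Q, ~ zcenter n.-1 x) /\ (forall x : Q, zcenter n x).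

(* Powers: a^k = a^(k-1) a for k >= 0 (well defined by power-associativity),
   a^(-k) = (a^k)^{-1}, with x^{-1} = x \ 1 (two-sided in a commutative loop). *)
Fixpoint npow (a : Q) (k : nat) : Q :=
  match k with 0 => 1 | k'.+1 => npow a k' * a end.

Definition linv (a : Q) : Q := lldiv a 1.

Definition zpow (a : Q) (n : int) : Q :=
  match n with
  | Posz k => npow a k
  | Negz k => linv (npow a k.+1)
  end.

(* Associator: (ab)c = (a(bc)) (a,b,c). *)
Definition assoc (a b c : Q) : Q := lldiv (a * (b * c)) ((a * b) * c).

End LoopDefs.

Definition alpha (n : int) : int := ((n ^+ 3 - n) %/ 3)%Z.
Definition beta (n : int) : int := n ^+ 2 - n.

(* Main.v *)
Require Import Defs.
From HB Require Import structures.
From mathcomp Require Import all_boot all_algebra.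
From mathcomp Require Import boolp.
From mathcomp.algebra_tactics Require Import ring.
Set Implicit Arguments. Unset Strict Implicit. Unset Printing Implicit Defensive.
Import GRing.Theory.

Section S.
Variable Q : loop.
Local Notation "x ** y" := (@lmul Q x y) (at level 40, left associativity).
Local Notation ld := (@lldiv Q).
Local Notation one := (lone Q).
Hypothesis comm : commutative_loop Q.
Hypothesis aut : automorphic Q.

Lemma mulK (x y : Q) : x ** ld x y = y. Proof. exact: lmulKl. Qed.
Lemma ldK (x y : Q) : ld x (x ** y) = y. Proof. exact: lldivK. Qed.
Lemma mulI (x y z : Q) : x ** y = x ** z -> y = z.
Proof. by move=> h; rewrite -(ldK x y) h ldK. Qed.
Lemma mul1 (x : Q) : one ** x = x. Proof. exact: lmul1l. Qed.
Lemma mulr1 (x : Q) : x ** one = x. Proof. exact: lmul1r. Qed.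
Lemma mC (x y : Q) : x ** y = y ** x. Proof. exact: comm. Qed.
Lemma ldd (x : Q) : ld x x = one. Proof. by rewrite -{2}(mulr1 x) ldK. Qed.

Definition Zc (x : Q) := forall phi, inner phi -> phi x = x.
Definition Lxy (x y : Q) : Q -> Q := fun u => ld (x ** y) (x ** (y ** u)).

Lemma inner_Lxy x y : inner (Lxy x y).
Proof.
split; first exact: (mlt_Li (x ** y) (mlt_L x (mlt_L y (mlt_id Q)))).
by rewrite /Lxy mulr1 ldd.
Qed.

Lemma autM phi : inner phi -> forall x y, phi (x ** y) = phi x ** phi y.
Proof. by move=> h; case: (aut h). Qed.
Lemma aut1 phi : inner phi -> phi one = one.
Proof. by case. Qed.
Lemma autD phi : inner phi -> forall x y, phi (ld x y) = ld (phi x) (phi y).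
Proof.
by move=> h x y; apply: (@mulI (phi x)); rewrite mulK -autM // mulK.
Qed.

Lemma cA c x y : Zc c -> x ** (y ** c) = (x ** y) ** c.
Proof.
move=> hc; have := hc _ (inner_Lxy x y); rewrite /Lxy => h.
by rewrite -{2}h mulK.
Qed.

Lemma Zc1 : Zc one. Proof. by move=> phi /aut1. Qed.
Lemma ZcM a b : Zc a -> Zc b -> Zc (a ** b).
Proof. by move=> ha hb phi h; rewrite autM // ha // hb. Qed.
Lemma ZcV a : Zc a -> Zc (ld a one).
Proof. by move=> ha phi h; rewrite autD // ha // aut1. Qed.

Lemma cAr c x y : Zc c -> (x ** c) ** y = (x ** y) ** c.
Proof. by move=> hc; rewrite mC (mC x y) -cA // (mC c). Qed.
Lemma cACA c d x y : Zc c -> Zc d -> (x ** c) ** (y ** d) = (x ** y) ** (c ** d).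
Proof.
by move=> hc hd; rewrite (cA (x ** c) y hd) (cAr x y hc) -(cA (x ** y) c hd).
Qed.

Record Zt := ZT { zv : Q; zP : Zc zv }.
HB.instance Definition _ := gen_eqMixin Zt.
HB.instance Definition _ := gen_choiceMixin Zt.
Lemma zt_eq (a b : Zt) : zv a = zv b -> a = b.
Proof.
case: a b => [a ha] [b hb] /= e; subst b; congr ZT; exact: Prop_irrelevance.
Qed.
Definition zadd (a b : Zt) := ZT (ZcM (zP a) (zP b)).
Definition zopp (a : Zt) := ZT (ZcV (zP a)).
Definition zzero := ZT Zc1.
Lemma zaddA : associative zadd.
Proof. by move=> a b c; apply: zt_eq => /=; rewrite cA //; case: c. Qed.
Lemma zaddC : commutative zadd.
Proof. by move=> a b; apply: zt_eq => /=; rewrite mC. Qed.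
Lemma zadd0 : left_id zzero zadd.
Proof. by move=> a; apply: zt_eq => /=; rewrite mul1. Qed.
Lemma zaddN : left_inverse zzero zopp zadd.
Proof. by move=> a; apply: zt_eq => /=; rewrite mC mulK. Qed.
HB.instance Definition _ := GRing.isZmodule.Build Zt zaddA zaddC zadd0 zaddN.


Local Open Scope ring_scope.

Definition toZ (x : Q) : Zt :=
  match pselect (Zc x) with left h => ZT h | right _ => 0 end.
Lemma toZK x : Zc x -> zv (toZ x) = x.
Proof. by move=> hx; rewrite /toZ; case: pselect. Qed.
Lemma zvD (a b : Zt) : zv (a + b) = zv a ** zv b. Proof. by []. Qed.
Lemma zvN (a : Zt) : zv (- a) = ld (zv a) one. Proof. by []. Qed.
Lemma zv0 : zv 0 = one. Proof. by []. Qed.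
Lemma zvK (a : Zt) : toZ (zv a) = a.
Proof. by apply: zt_eq; rewrite toZK //; case: a. Qed.
Lemma toZ1 : toZ one = 0.
Proof. by apply: zt_eq; rewrite toZK //; exact: Zc1. Qed.
Lemma toZM x y : Zc x -> Zc y -> toZ (x ** y) = toZ x + toZ y.
Proof. by move=> hx hy; apply: zt_eq; rewrite zvD !toZK //; exact: ZcM. Qed.

Lemma linvP (x : Q) : x ** linv x = one. Proof. exact: mulK. Qed.
Lemma linv_uniq (x y : Q) : x ** y = one -> y = linv x.
Proof. by move=> h; rewrite /linv -h ldK. Qed.
Lemma linvK (x : Q) : linv (linv x) = x.
Proof. by apply/esym/linv_uniq; rewrite mC linvP. Qed.
Lemma linv1 : linv one = one.
Proof. by apply/esym/linv_uniq; rewrite mulr1. Qed.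
Lemma linvMc c (y : Q) : Zc c -> linv (y ** c) = linv y ** linv c.
Proof.
move=> hc; apply/esym/linv_uniq.
by rewrite (cACA _ _ hc (ZcV hc)) !linvP mulr1.
Qed.
Lemma toZV c : Zc c -> toZ (linv c) = - toZ c.
Proof. by move=> hc; apply: zt_eq; rewrite zvN !toZK //; exact: ZcV. Qed.
Lemma zt_inj x y : Zc x -> Zc y -> toZ x = toZ y -> x = y.
Proof. by move=> hx hy e; rewrite -(toZK hx) -(toZK hy) e. Qed.

Lemma npow_zv (a : Zt) k : npow (zv a) k = zv (a *+ k).
Proof. by elim: k => [|k IH] //=; rewrite IH mulrS zvD mC. Qed.
Lemma zpow_zv (a : Zt) n : zpow (zv a) n = zv (a *~ n).
Proof.
by case: n => k; rewrite /zpow npow_zv. Qed.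

Definition U (u : Q) := forall psi, inner psi -> Zc (ld u (psi u)).
Hypothesis Z3 : forall x : Q, zcenter 3 x.

Lemma zc1_one : zcenter 1 one.
Proof. by move=> phi _ h; exists one => //; rewrite h mulr1. Qed.
Lemma zc2_one : zcenter 2 one.
Proof. by move=> phi _ h; exists (phi one) => //; rewrite mul1. Qed.
Lemma zc1_Zc z : zcenter 1 z -> Zc z.
Proof. by move=> h phi [hm h1]; case: (h phi hm h1) => w -> ->; rewrite mulr1. Qed.
Lemma zc2_U u : zcenter 2 u -> U u.
Proof.
move=> h psi [hm h1]; case: (h psi hm); first by rewrite h1; exact: zc1_one.
by move=> z hz ->; rewrite ldK; exact: zc1_Zc.
Qed.
Lemma epsU x phi : inner phi -> U (ld x (phi x)).
Proof.
move=> [hm h1]; case: (Z3 x hm); first by rewrite h1; exact: zc2_one.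
by move=> z hz ->; rewrite ldK; exact: zc2_U.
Qed.

Lemma U_Zc c : Zc c -> U c.
Proof. by move=> hc psi h; rewrite hc // ldd; exact: Zc1. Qed.
Lemma UM u v : U u -> U v -> U (u ** v).
Proof.
move=> hu hv psi h.
have ha := hu _ h; have hb := hv _ h.
set a := ld u (psi u) in ha *; set b := ld v (psi v) in hb *.
have ea : psi u = u ** a by rewrite /a mulK.
have eb : psi v = v ** b by rewrite /b mulK.
by rewrite autM // ea eb (cACA _ _ ha hb) ldK; exact: ZcM.
Qed.
Lemma UV u : U u -> U (linv u).
Proof.
move=> hu psi h.
have ha := hu _ h; set a := ld u (psi u) in ha *.
have ea : psi u = u ** a by rewrite /a mulK.
rewrite /linv (autD h) (aut1 h) ea; have -> : ld (u ** a) one = linv u ** linv a by exact: linvMc.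
by rewrite ldK; exact/ZcV.
Qed.
Lemma Unpow u m : U u -> U (npow u m).
Proof. by move=> hu; elim: m => [|m IH] /=; [exact/U_Zc/Zc1 | exact: UM]. Qed.

Definition B u x y := ld u (Lxy x y u).
Definition Bz u x y := toZ (B u x y).
Lemma BZc u x y : U u -> Zc (B u x y).
Proof. by move=> hu; exact: hu _ (inner_Lxy x y). Qed.
Lemma LxyB u x y : Lxy x y u = u ** B u x y.
Proof. by rewrite /B mulK. Qed.
Lemma LxyE x y t : (x ** y) ** Lxy x y t = x ** (y ** t).
Proof. by rewrite /Lxy mulK. Qed.

Lemma B2 u x y : U u -> x ** (u ** y) = (u ** (x ** y)) ** B u x y.
Proof.
move=> hu; rewrite (mC u y) -LxyE LxyB cA; last exact: BZc.
by rewrite (mC (x ** y) u).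
Qed.
Lemma B3 u x y : U u -> (u ** x) ** y = (u ** (x ** y)) ** B u y x.
Proof.
by move=> hu; rewrite [(u ** x) ** y]mC (B2 _ _ hu) [y ** x]mC.
Qed.

Lemma Bc c x y : Zc c -> B c x y = one.
Proof. by move=> hc; rewrite /B (hc _ (inner_Lxy x y)) ldd. Qed.
Lemma BM u v x y : U u -> U v -> B (u ** v) x y = B u x y ** B v x y.
Proof.
move=> hu hv; rewrite {1}/B (autM (inner_Lxy x y)) !LxyB cACA ?ldK //; exact: BZc.
Qed.
Lemma Bz_c c x y : Zc c -> Bz c x y = 0.
Proof. by move=> hc; rewrite /Bz Bc // toZ1. Qed.
Lemma BzM u v x y : U u -> U v -> Bz (u ** v) x y = Bz u x y + Bz v x y.
Proof. by move=> hu hv; rewrite /Bz BM // toZM //; exact: BZc. Qed.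
Lemma BzC u c x y : U u -> Zc c -> Bz (u ** c) x y = Bz u x y.
Proof. by move=> hu hc; rewrite (BzM x y hu (U_Zc hc)) (Bz_c x y hc) addr0. Qed.
Lemma BzV u x y : U u -> Bz (linv u) x y = - Bz u x y.
Proof.
move=> hu; have := BzM x y hu (UV hu); rewrite linvP Bz_c; last exact: Zc1.
by move/eqP; rewrite eq_sym addrC addr_eq0 => /eqP.
Qed.
Lemma Bz_npow u m x y : U u -> Bz (npow u m) x y = Bz u x y *+ m.
Proof.
move=> hu; elim: m => [|m IH] /=; first by rewrite Bz_c //; exact: Zc1.
by rewrite BzM ?IH ?mulrSr //; exact: Unpow.
Qed.
Lemma BzZ u c x y : U u -> Zc c -> Bz (u ** c) x y = Bz u x y.
Proof. exact: BzC. Qed.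


Ltac zc := repeat first [ assumption | apply: ZcM | apply: BZc; assumption | apply: ZcV | exact: Zc1 ].

Lemma BZcV u x y : U u -> Zc (linv (B u x y)).
Proof. by move=> hu; apply: ZcV; exact: BZc. Qed.

Lemma Lux u x y : U u -> Lxy u x y = y ** linv (B u y x).
Proof.
move=> hu; apply: (@mulI (u ** x)); rewrite LxyE.
rewrite (cA _ _ (BZcV y x hu)) (B3 _ _ hu) -(cA _ _ (BZcV y x hu)).
by rewrite linvP mulr1.
Qed.
Lemma Lxu u x y : U u -> Lxy x u y = y ** (linv (B u y x) ** B u x y).
Proof.
move=> hu; apply: (@mulI (x ** u)); rewrite LxyE [x ** (u ** y)](B2 _ _ hu) [x ** u]mC.
have hc : Zc (linv (B u y x) ** B u x y) by apply: ZcM; [exact: BZcV | exact: BZc].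
rewrite (cA _ _ hc) [u ** x ** y](B3 _ _ hu) -(cA _ _ hc).
by rewrite (cA _ _ (BZc x y hu)) linvP mul1.
Qed.

Lemma BzD2 u x y z : U u -> Bz u (y ** z) x = Bz u y x + Bz u z x.
Proof.
move=> hu; have h := autM (inner_Lxy u x) y z.
rewrite !Lux // (cACA _ _ (BZcV _ _ hu) (BZcV _ _ hu)) in h.
have := mulI h => /(congr1 toZ).
rewrite (toZM (BZcV _ _ hu) (BZcV _ _ hu)) !(toZV (BZc _ _ hu)).
by move/eqP; rewrite -opprD eqr_opp => /eqP.
Qed.
Lemma BzD3 u x y z : U u -> Bz u x (y ** z) = Bz u x y + Bz u x z.
Proof.
move=> hu; have h := autM (inner_Lxy x u) y z.
have hc t : Zc (linv (B u t x) ** B u x t) by apply: ZcM; [exact: BZcV | exact: BZc].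
rewrite !Lxu // (cACA _ _ (hc y) (hc z)) in h.
have := mulI h => /(congr1 toZ).
rewrite !toZM; try by zc.
rewrite !toZV; try by zc.
rewrite -!/(Bz u _ _) BzD2 // opprD addrACA.
by move/addrI.
Qed.

Lemma zself (t : Zt) : t = t + t -> t = 0.
Proof. by rewrite -{1}(addr0 t) => /addrI. Qed.

Lemma lin1 (a b c e : Zt) : (a + b) + c = ((b + c) + e) + a -> e = 0.
Proof.
move=> h; apply: (@addrI _ (b + c + a)); rewrite addr0.
by rewrite addrAC -h -addrA addrC.
Qed.

Lemma Bz_x1 u x : U u -> Bz u x one = 0.
Proof. by move=> hu; apply: zself; rewrite -BzD3 // mulr1. Qed.
Lemma Bz_1y u y : U u -> Bz u one y = 0.
Proof. by move=> hu; apply: zself; rewrite -BzD2 // mulr1. Qed.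
Lemma Bz_xV u x y : U u -> Bz u x (linv y) = - Bz u x y.
Proof.
move=> hu; have := BzD3 x y (linv y) hu; rewrite linvP Bz_x1 //.
by move/eqP; rewrite eq_sym addrC addr_eq0 => /eqP.
Qed.
Lemma Bz_Vy u x y : U u -> Bz u (linv x) y = - Bz u x y.
Proof.
move=> hu; have := BzD2 y x (linv x) hu; rewrite linvP Bz_1y //.
by move/eqP; rewrite eq_sym addrC addr_eq0 => /eqP.
Qed.
Lemma Bz_xn u x y m : U u -> Bz u x (npow y m) = Bz u x y *+ m.
Proof.
move=> hu; elim: m => [|m IH] /=; first exact: Bz_x1.
by rewrite BzD3 // IH mulrSr.
Qed.
Lemma Bz_ny u x y m : U u -> Bz u (npow x m) y = Bz u x y *+ m.
Proof.
move=> hu; elim: m => [|m IH] /=; first exact: Bz_1y.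
by rewrite BzD2 // IH mulrSr.
Qed.

Lemma Bz_uu u y : U u -> Bz u u y = 0.
Proof.
move=> hu; have h := B2 u y hu.
rewrite -{1}(mulr1 (u ** (u ** y))) in h.
by rewrite /Bz -(mulI h) toZ1.
Qed.

Lemma Binv phi u w z : inner phi -> U u -> Bz u (phi w) (phi z) = Bz u w z.
Proof.
move=> hp hu.
have e : phi (Lxy w z u) = Lxy (phi w) (phi z) (phi u).
  by rewrite /Lxy (autD hp) !(autM hp).
have hg := hu _ hp; set g := ld u (phi u) in hg.
have eg : phi u = u ** g by rewrite /g mulK.
have hb : phi (B u w z) = B u w z by apply: (BZc w z hu).
have hg2 : Lxy (phi w) (phi z) g = g by apply: hg; exact: inner_Lxy.
rewrite LxyB (autM hp) hb eg (autM (inner_Lxy _ _)) LxyB hg2 (cAr _ _ hg) in e.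
have e2 : g ** (u ** B u w z) = g ** (u ** B u (phi w) (phi z)) by rewrite !(mC g) e.
by rewrite /Bz (mulI (mulI e2)).
Qed.

Lemma BII u x y z : U u -> Bz u (x ** y) (ld z (Lxy x y z)) = 0.
Proof.
move=> hu.
have cyc v : Lxy x (y ** z) (Lxy y z v) = Lxy (x ** y) (Lxy x y z) (Lxy x y v).
  rewrite {1}/Lxy LxyE {1}/Lxy -(autM (inner_Lxy x y)) !LxyE.
  by [].
have h := cyc u.
rewrite [Lxy y z u]LxyB [Lxy x y u]LxyB in h.
rewrite (autM (inner_Lxy x (y ** z))) (autM (inner_Lxy (x ** y) (Lxy x y z))) in h.
have f1 : Lxy x (y ** z) (B u y z) = B u y z by apply: (BZc y z hu); exact: inner_Lxy.
have f2 : Lxy (x ** y) (Lxy x y z) (B u x y) = B u x y by apply: (BZc x y hu); exact: inner_Lxy.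
rewrite f1 f2 !LxyB -!(cA _ _ (BZc _ _ hu)) in h.
have := mulI h => /(congr1 toZ); rewrite !toZM; try by zc.
rewrite -!/(Bz _ _ _) [Bz u (x ** y) (z ** _)]BzD3 // -/(B z x y).
set E := Bz u (x ** y) (B z x y).
rewrite [Bz u x (y ** z)]BzD3 // [Bz u (x ** y) z]BzD2 //.
exact: lin1.
Qed.


Lemma zvV (a : Zt) : linv (zv a) = zv (- a). Proof. by []. Qed.
Lemma zZc (t : Zt) : Zc (zv t). Proof. by case: t. Qed.
Lemma zA P (a b : Zt) : (P ** zv a) ** zv b = P ** zv (a + b).
Proof. by rewrite zvD (cA _ _ (zZc b)). Qed.
Lemma zsolve P R (b : Zt) : R = P ** zv b -> P = R ** zv (- b).
Proof. by move=> ->; rewrite zA addrN zv0 mulr1. Qed.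
Lemma BzK u x y : U u -> zv (Bz u x y) = B u x y.
Proof. by move=> hu; rewrite toZK //; exact: BZc. Qed.
Lemma B2z u x y : U u -> x ** (u ** y) = (u ** (x ** y)) ** zv (Bz u x y).
Proof. by move=> hu; rewrite BzK // B2. Qed.
Lemma B3z u x y : U u -> (u ** x) ** y = (u ** (x ** y)) ** zv (Bz u y x).
Proof. by move=> hu; rewrite BzK // B3. Qed.

Lemma Bev phi v : inner phi -> Bz (ld v (phi v)) v (ld v (phi v)) = 0.
Proof.
move=> hp; have hu := epsU v hp; set e := ld v (phi v) in hu *.
have := Binv v v hp hu; have -> : phi v = v ** e by rewrite /e mulK.
rewrite !BzD2 // !BzD3 // !Bz_uu // addr0.
by rewrite addr0 -{2}(addr0 (Bz e v v)) => /addrI.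
Qed.

Lemma Mf y x E e : U E -> U e ->
  (y ** E) ** (x ** e) =
  ((E ** e) ** (x ** y)) ** zv (Bz e y x + Bz E (x ** e) y - Bz E (x ** y) e).
Proof.
move=> hE he.
rewrite [y ** E]mC [(E ** y) ** _]mC (B2z _ _ hE).
have h1 : (x ** e) ** y = (e ** (x ** y)) ** zv (Bz e y x) by rewrite [x ** e]mC B3z.
rewrite h1 (cA _ _ (zZc _)).
have h2 := B3z e (x ** y) hE.
rewrite (zsolve h2) !zA; congr (_ ** zv _).
by rewrite addrC.
Qed.

Lemma linvM y E : U E -> linv (y ** E) = linv y ** linv E.
Proof.
move=> hE; apply/esym/linv_uniq.
rewrite (Mf _ _ hE (UV hE)) linvP [linv y ** y]mC linvP mulr1 mul1.
rewrite (Bz_1y _ hE) subr0 BzD2 // (BzV _ _ hE) Bz_xV // opprK.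
rewrite !Bz_Vy // Bz_uu // oppr0 addr0 addrN.
by rewrite zv0.
Qed.


Fixpoint al (m : nat) : nat := if m is m'.+1 then (al m' + m' * m)%N else 0%N.

Lemma al3 m : (al m)%:Z * 3 = (m%:Z) ^+ 3 - m%:Z.
Proof.
elim: m => [|m IH] //.
rewrite [al _]/= PoszD PoszM mulrDl IH intS; ring.
Qed.
Lemma alphaP m : alpha (Posz m) = (al m)%:Z.
Proof. by rewrite /alpha -al3 mulzK. Qed.
Lemma alphaN k : alpha (Negz k) = - (al k.+1)%:Z.
Proof.
rewrite /alpha NegzE.
have -> : (- (k.+1)%:Z) ^+ 3 - - (k.+1)%:Z = (- (al k.+1)%:Z) * 3 by rewrite mulNr al3; ring.
by rewrite mulzK.
Qed.

Section Eps.
Variable phi : Q -> Q.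
Hypothesis hp : inner phi.
Local Notation eps y := (ld y (phi y)).
Lemma epsE y : phi y = y ** eps y. Proof. by rewrite mulK. Qed.
Lemma Ueps y : U (eps y). Proof. exact: epsU. Qed.

Lemma eps_mul y z : eps (y ** z) =
  (eps y ** eps z) ** zv (Bz (eps z) y z + Bz (eps y) (z ** eps z) y - Bz (eps y) (z ** y) (eps z)).
Proof.
have hy := Ueps y; have hz := Ueps z.
have ey := epsE y; have ez := epsE z.
set E := eps y in hy ey *; set F := eps z in hz ez *.
rewrite (autM hp) ey ez (Mf _ _ hy hz) -(cA _ _ (zZc _)).
rewrite [z ** y]mC (cA _ _ (zZc _)) [(E ** F) ** (y ** z)]mC -(cA _ _ (zZc _)).
by rewrite ldK.
Qed.

Variable v : Q.
Local Notation e := (eps v).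
Local Notation w := (Bz e v v).

Lemma Epow m : eps (npow v m) = npow e m ** zv (w *+ al m).
Proof.
elim: m => [|m IH] /=; first by rewrite (aut1 hp) ldd mulr1.
rewrite eps_mul IH.
have he : U e := Ueps v.
have hum : U (npow e m) by apply: Unpow.
rewrite !(BzC _ _ hum (zZc _)) !Bz_npow //.
rewrite (cAr _ _ (zZc _)) zA; congr (_ ** zv _).
rewrite [Bz e (v ** e) _]BzD2 // Bz_uu // addr0 [Bz e (v ** _) e]BzD2 // (Bev v hp) add0r.
rewrite Bz_xn // !Bz_ny // (Bev v hp) mul0rn mul0rn subr0.
by rewrite mulnS !mulrnDr mulrnA.
Qed.


Lemma GL0 s y : ld (s ** y) (s ** phi y) = eps y ** zv (Bz (eps y) s y).
Proof.
have hy := Ueps y; have ey := epsE y; set E := eps y in hy ey *.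
rewrite ey [y ** E]mC (B2z _ _ hy) [E ** _]mC.
by rewrite -(cA _ _ (zZc _)) ldK.
Qed.

Lemma eps_linv y : eps (linv y) = linv (eps y).
Proof.
have hy := Ueps y; have ey := epsE y; set E := eps y in hy ey *.
by rewrite /linv (autD hp) (aut1 hp) ey -!/(linv _) (linvM _ hy) ldK.
Qed.


Lemma GLpos s m : ld (s ** npow v m) (s ** phi (npow v m)) =
  npow e m ** zv (w *+ al m + Bz e s v *+ m *+ m).
Proof.
have he : U e := Ueps v.
have hum : U (npow e m) by apply: Unpow.
by rewrite GL0 Epow (BzC _ _ hum (zZc _)) Bz_npow // Bz_xn // zA.
Qed.

Lemma GLneg s m : ld (s ** linv (npow v m)) (s ** phi (linv (npow v m))) =
  linv (npow e m) ** zv (- (w *+ al m) + Bz e s v *+ m *+ m).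
Proof.
have he : U e := Ueps v.
have hum : U (npow e m) by apply: Unpow.
have hc : U (npow e m ** zv (w *+ al m)) by apply: UM => //; apply: U_Zc; exact: zZc.
rewrite GL0 eps_linv Epow (BzV _ _ hc) (BzC _ _ hum (zZc _)) Bz_npow // Bz_xV // Bz_xn //.
by rewrite (linvMc _ (zZc _)) zvV zA mulNrn opprK.
Qed.

Lemma GLz s n : ld (s ** zpow v n) (s ** phi (zpow v n)) =
  zpow e n ** zv (w *~ alpha n + Bz e s v *~ (n * n)).
Proof.
case: n => k.
  rewrite /zpow GLpos alphaP; congr (_ ** zv (_ + _)).
  by rewrite -PoszM -pmulrn mulrnA.
rewrite /zpow GLneg alphaN mulrNz -pmulrn; congr (_ ** zv (_ + _)).
by rewrite NegzE mulrNN -PoszM -pmulrn mulrnA.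

Qed.

End Eps.

Lemma npowMc u (c : Zt) m : npow (u ** zv c) m = npow u m ** zv (c *+ m).
Proof.
elim: m => [|m IH] /=; first by rewrite mulr1.
by rewrite IH (cACA _ _ (zZc _) (zZc _)) mulrSr.
Qed.
Lemma zpowMc u (c : Zt) n : zpow (u ** zv c) n = zpow u n ** zv (c *~ n).
Proof.
case: n => k; rewrite /zpow npowMc; first by rewrite -pmulrn.
by rewrite (linvMc _ (zZc _)).
Qed.

Lemma aut_npow (phi : Q -> Q) (x : Q) m : inner phi -> phi (npow x m) = npow (phi x) m.
Proof.
move=> hp; elim: m => [|m IH] /=; first exact: aut1.
by rewrite (autM hp) IH.
Qed.
Lemma aut_zpow (phi : Q -> Q) (x : Q) n : inner phi -> phi (zpow x n) = zpow (phi x) n.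
Proof.
move=> hp; case: n => k; rewrite /zpow; first exact: aut_npow.
by rewrite /linv (autD hp) (aut1 hp) (aut_npow _ _ hp).
Qed.

Lemma assocB u x y : U u -> assoc u x y = zv (Bz u y x).
Proof. by move=> hu; rewrite /assoc (B3z _ _ hu) ldK. Qed.

Lemma final phi (hp : inner phi) s v p q r n A :
  Bz (ld v (phi v)) p p = Bz (ld v (phi v)) v v ->
  Bz (ld v (phi v)) q p + Bz (ld v (phi v)) r p = Bz (ld v (phi v)) s v ->
  A = ld (s ** v) (s ** phi v) ->
  ld (s ** zpow v n) (s ** phi (zpow v n)) =
  (((zpow A n) ** (zpow (assoc A p p) (alpha n))) ** (zpow (assoc A p q) (beta n)))
     ** (zpow (assoc A p r) (beta n)).
Proof.
move=> h1 h2 eA0.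
have he : U (ld v (phi v)) := Ueps hp v.
set e := ld v (phi v) in he h1 h2 *.
have eA : A = e ** zv (Bz e s v) by rewrite eA0 GL0.
have hA : U A by rewrite eA; apply: UM => //; apply: U_Zc; exact: zZc.
rewrite !(assocB _ _ hA) eA !(BzC _ _ he (zZc _)) h1 !zpow_zv zpowMc (GLz hp) !zA.
congr (_ ** zv _).
rewrite -/e -mulrzDl h2 addrCA -mulrzDr.
by congr (_ + _ *~ _); rewrite /beta; ring.
Qed.


Lemma assocF1 b c y : assoc y b c = ld ((b ** c) ** y) ((b ** c) ** Lxy c b y).
Proof.
rewrite /assoc [y ** (b ** c)]mC [(y ** b) ** c]mC [y ** b]mC -[c ** (b ** y)]LxyE.
by rewrite [c ** b]mC.
Qed.

Definition Ti (a c : Q) : Q -> Q := fun w => ld c (ld a ((a ** c) ** w)).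
Definition phi2 (a c : Q) : Q -> Q := fun w => Lxy c a (Ti a c w).
Lemma inner_Ti a c : inner (Ti a c).
Proof.
split; first exact: (mlt_Li c (mlt_Li a (mlt_L (a ** c) (mlt_id Q)))).
by rewrite /Ti mulr1 ldK ldd.
Qed.
Lemma inner_phi2 a c : inner (phi2 a c).
Proof.
split.
  exact: (mlt_Li (c ** a) (mlt_L c (mlt_L a (mlt_Li c (mlt_Li a (mlt_L (a ** c) (mlt_id Q))))))).
by rewrite /phi2 (aut1 (inner_Ti a c)) (aut1 (inner_Lxy c a)).
Qed.
Lemma TiK a c y : Ti a c (Lxy a c y) = y.
Proof. by rewrite /Ti LxyE !ldK. Qed.

Lemma assocF2 a c y :
  assoc a y c = ld ((a ** c) ** Lxy a c y) ((a ** c) ** phi2 a c (Lxy a c y)).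
Proof.
rewrite /phi2 TiK /assoc [y ** c]mC -[a ** (c ** y)]LxyE [(a ** y) ** c]mC.
by rewrite -[c ** (a ** y)]LxyE [c ** a]mC.
Qed.
Lemma assocF3 a b y :
  assoc a b y = ld ((a ** b) ** Lxy a b y) ((a ** b) ** Ti a b (Lxy a b y)).
Proof. by rewrite TiK /assoc -[a ** (b ** y)]LxyE. Qed.

Lemma F1 a b c n :
  assoc (zpow a n) b c =
  (((zpow (assoc a b c) n) ** (zpow (assoc (assoc a b c) a a) (alpha n)))
     ** (zpow (assoc (assoc a b c) a b) (beta n)))
     ** (zpow (assoc (assoc a b c) a c) (beta n)).
Proof.
have hp := inner_Lxy c b.
have he := epsU a hp.
rewrite assocF1; apply: (final hp) => //; last exact: assocF1.
by rewrite (BzD2 _ _ _ he).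
Qed.

Lemma F2 a b c n :
  assoc a (zpow b n) c =
  (((zpow (assoc a b c) n) ** (zpow (assoc (assoc a b c) b b) (alpha n)))
     ** (zpow (assoc (assoc a b c) b a) (beta n)))
     ** (zpow (assoc (assoc a b c) b c) (beta n)).
Proof.
have hp := inner_phi2 a c.
have he := epsU (Lxy a c b) hp.
rewrite assocF2 (aut_zpow _ _ (inner_Lxy a c)); apply: (final hp); last exact: assocF2.
  by rewrite (Binv b b (inner_Lxy a c) he).
have eL : Lxy a c b = b ** ld b (Lxy a c b) by rewrite mulK.
set e := ld (Lxy a c b) _ in he *.
by rewrite -(BzD2 _ _ _ he) [in RHS]eL (BzD3 _ _ _ he) (BII _ _ _ he) addr0.
Qed.

Lemma F3 a b c n :
  assoc a b (zpow c n) =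
  (((zpow (assoc a b c) n) ** (zpow (assoc (assoc a b c) c c) (alpha n)))
     ** (zpow (assoc (assoc a b c) c a) (beta n)))
     ** (zpow (assoc (assoc a b c) c b) (beta n)).
Proof.
have hp := inner_Ti a b.
have he := epsU (Lxy a b c) hp.
rewrite assocF3 (aut_zpow _ _ (inner_Lxy a b)); apply: (final hp); last exact: assocF3.
  by rewrite (Binv c c (inner_Lxy a b) he).
have eL : Lxy a b c = c ** ld c (Lxy a b c) by rewrite mulK.
set e := ld (Lxy a b c) _ in he *.
by rewrite -(BzD2 _ _ _ he) [in RHS]eL (BzD3 _ _ _ he) (BII _ _ _ he) addr0.
Qed.

End S.

Unset Implicit Arguments.
Theorem lemma3p1 (Q : loop) :
  commutative_loop Q -> automorphic Q -> nilpotency_class Q 3 ->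
  forall (a b c : Q) (n : int),
    let A := assoc a b c in
    [/\ assoc (zpow a n) b c =
          lmul (lmul (lmul (zpow A n) (zpow (assoc A a a) (alpha n)))
                     (zpow (assoc A a b) (beta n)))
               (zpow (assoc A a c) (beta n)),
        assoc a (zpow b n) c =
          lmul (lmul (lmul (zpow A n) (zpow (assoc A b b) (alpha n)))
                     (zpow (assoc A b a) (beta n)))
               (zpow (assoc A b c) (beta n))
      & assoc a b (zpow c n) =
          lmul (lmul (lmul (zpow A n) (zpow (assoc A c c) (alpha n)))
                     (zpow (assoc A c a) (beta n)))
               (zpow (assoc A c b) (beta n))].
Proof.
move=> hc ha [_ hz] a b c n A.
by split; [exact: F1 | exact: F2 | exact: F3].
Qed.
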